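(* Let $1\le K<d$ be integers and $T_\lambda$ as below. There exists $\bar\lambda<1$ such that for all $\lambda\in(\bar\lambda,1)$ the equation $T_\lambda(u)=u$ has a solution in $(1,\infty)$. Letting $u_\lambda$ denote the minimal solution in $[1,\infty)$ for $\lambda\in(\bar\lambda,1)$: (a) $\lim_{\lambda\to1^-}u_\lambda=1$; (b) with $h_\lambda(x)=\frac{u_\lambda-T_\lambda(u_\lambda-x)}{x}$, we have $\lim_{\varepsilon\to0^+}\lim_{\lambda\to1^-}h_\lambda(\varepsilon)=\frac dK$.
   Context: $T_\lambda(u)=\frac{\lambda}{K}\sum_{j=0}^{K-1}(K-j)\binom{d}{j}u^{d-j}(1-u)^j$ for $u\in[0,\infty)$, $\lambda\in(0,1)$. *)

(* Defs.v *)
From HB Require Import structures.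
From mathcomp Require Import all_boot all_order all_algebra.
From mathcomp Require Import all_classical all_reals all_analysis.
Set Implicit Arguments. Unset Strict Implicit. Unset Printing Implicit Defensive.
Import Order.TTheory GRing.Theory Num.Theory.
Import numFieldNormedType.Exports.
Local Open Scope ring_scope.

Definition Tl {R : realType} (K d : nat) (lam u : R) : R :=
  lam / K%:R * \sum_(j < K) ((K - j)%:R * 'C(d, j)%:R * u ^+ (d - j) * (1 - u) ^+ j).

Definition is_min_sol {R : realType} (K d : nat) (lam m : R) : Prop :=
  1 <= m /\ Tl K d lam m = m /\ (forall v : R, 1 <= v -> Tl K d lam v = v -> m <= v).

Definition hl {R : realType} (K d : nat) (lam ul x : R) : R :=
  (ul - Tl K d lam (ul - x)) / x.

(* Main.v *)
Require Import Defs.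
From HB Require Import structures.
From mathcomp Require Import all_boot all_order all_algebra.
From mathcomp Require Import all_classical all_reals all_analysis.
From mathcomp Require Import ring lra.
Import Order.TTheory GRing.Theory Num.Theory.
Import numFieldNormedType.Exports.
Local Open Scope classical_set_scope.
Local Open Scope ring_scope.

Section P.
Variable R : realType.
Definition Pp (K d : nat) : {poly R} :=
  \sum_(j < K) ((K - j)%:R * 'C(d, j)%:R)%:P * ('X^(d - j) * (1 - 'X) ^+ j).

Lemma Tl_poly K d lam u : Tl K d lam u = lam / K%:R * (Pp K d).[u].
Proof.
rewrite /Tl /Pp horner_sum; congr (_ * _); apply: eq_bigr => j _.
by rewrite !hornerE.
Qed.

Lemma Pp1 K d : (1 <= K)%N -> (Pp K d).[1] = K%:R.
Proof.
case: K => // k _; rewrite /Pp horner_sum big_ord_recl /= big1 ?addr0.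
  by rewrite !hornerE /= subn0 bin0 expr1n !mulr1.
by move=> i _; rewrite !hornerE /= subrr expr0n /= !mulr0.
Qed.

Lemma dterm n j : (('X^n * (1 - 'X)^+j : {poly R})^`()).[1] = n%:R * (j == 0%N)%:R - (j == 1%N)%:R.
Proof.
rewrite derivM derivXn deriv_exp derivB derivC derivX sub0r.
rewrite hornerD !hornerM.
rewrite hornerMn hornerXn expr1n.
rewrite !hornerE /=.
rewrite (@hornerMn R) !hornerE /= subrr expr1n mul1r.
case: j => [|[|j]] /=; rewrite ?expr0 ?mulr1 ?mulr0n ?mulr1n ?addr0 ?subr0 //.
by rewrite !expr0n /= !mulr0 mul0rn addr0.
Qed.

Lemma dPp1 K d : (1 <= K)%N -> (Pp K d)^`().[1] = d%:R.
Proof.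
move=> hK; rewrite /Pp raddf_sum horner_sum.
rewrite (eq_bigr (fun j : 'I_K => (K - j)%:R * 'C(d, j)%:R *
   ((d - j)%:R * (val j == 0%N)%:R - (val j == 1%N)%:R))); last first.
  move=> j _ /=; rewrite derivM derivC mul0r add0r (@hornerM R) (@hornerC R).
  by rewrite dterm.
case: K hK => [//|k _]; rewrite big_ord_recl /= subn0 bin0 mulr1 mulr1 subr0.
case: k => [|k]. by rewrite big_ord0 addr0 mul1r /= subn0.
rewrite big_ord_recl /= big1 ?addr0; last first.
  by move=> i _; rewrite /bump /= !mulr0 sub0r mulrN mulr0 oppr0.
rewrite bin1 mulr0 sub0r mulrN1 subSS !subn0.
by rewrite [k.+2%:R]mulrS mulrDl mul1r addrK.
Qed.
End P.

Section A.
Variable R : realType.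
Variables K d : nat.
Hypothesis hK1 : (1 <= K)%N.
Hypothesis hKd : (K < d)%N.

Definition Fn (u : R) := (Pp R K d).[u] / K%:R.
Let c : R := d%:R / K%:R.

Lemma Tl_Fn lam u : Tl K d lam u = lam * Fn u.
Proof. by rewrite Tl_poly /Fn mulrAC mulrA. Qed.

Lemma Fn1 : Fn 1 = 1.
Proof. by rewrite /Fn Pp1 // divff // pnatr_eq0 -lt0n. Qed.

Lemma Fn_cont : continuous Fn.
Proof.
move=> x; apply: cvgM; [exact: continuous_horner | exact: cvg_cst].
Qed.

Lemma dq (e : R) : 0 < e -> exists2 r : R, 0 < r &
  forall h : R, h != 0 -> `|h| < r -> `|c - h^-1 * (Fn (h + 1) - 1)| < e.
Proof.
move=> e0.
have D : derivable (horner (Pp R K d)) 1 1 by exact: derivable_horner.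
have DV : 'D_1 (horner (Pp R K d)) 1 = d%:R.
  by rewrite derive_val dPp1.
have : (fun h : R => h^-1 *: ((horner (Pp R K d) \o shift 1) (h *: 1) - (Pp R K d).[1])) @ 0^' --> (d%:R : R).
  by rewrite -DV; exact: D.
have Kp : (0 : R) < K%:R by rewrite ltr0n.
move=> /cvgrPdist_lt /(_ (e * K%:R) (mulr_gt0 e0 Kp)).
rewrite near_withinE => /nbhs_ballP [r /= r0 Hr].
exists r => // h h0 hr.
have := Hr h; rewrite /ball /= sub0r normrN => /(_ hr h0).
rewrite /= Pp1 // /Fn scaler1 => H.
have -> : c - h^-1 * ((Pp R K d).[h + 1] / K%:R - 1) =
   (d%:R - h^-1 * ((Pp R K d).[h + 1] - K%:R)) / K%:R.
  rewrite /c; field.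
  by rewrite h0 /= pnatr_eq0 -lt0n hK1.
by rewrite normrM normfV (gtr0_norm Kp) ltr_pdivrMr.
Qed.

Lemma c_gt1 : 1 < c.
Proof.
have Kp : (0 : R) < K%:R by rewrite ltr0n.
by rewrite /c ltr_pdivlMr // mul1r ltr_nat.
Qed.

Lemma good (del : R) : 0 < del -> exists u1, 1 < u1 /\ u1 < 1 + del /\ u1 < Fn u1.
Proof.
move=> d0; have c1 : 0 < c - 1 by rewrite subr_gt0 c_gt1.
have [r r0 Hr] := @dq (c - 1) c1.
have m1 : Num.min del r <= del by rewrite ge_min lexx.
have m2 : Num.min del r <= r by rewrite ge_min lexx orbT.
have m0 : 0 < Num.min del r by rewrite lt_min d0 r0.
set h := Num.min del r / 2.
have h0 : 0 < h by rewrite /h; lra.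
have hdel : h < del by rewrite /h; lra.
have hr : h < r by rewrite /h; lra.
have := Hr h (lt0r_neq0 h0); rewrite gtr0_norm // => /(_ hr).
move=> H; exists (h + 1); split; first by rewrite ltrDr.
split; first by rewrite addrC ltrD2l.
have : 1 < h^-1 * (Fn (h + 1) - 1).
  move: H; rewrite ltr_norml => /andP [_ H1]; lra.
rewrite mulrC ltr_pdivlMr // mul1r; lra.
Qed.

Lemma froot (lam u1 : R) : 1 < u1 -> lam < 1 -> u1 < lam * Fn u1 ->
  exists u, [/\ 1 < u, u <= u1 & lam * Fn u = u].
Proof.
move=> u11 lam1 hu.
set f := fun u => lam * Fn u - u.
have fc : continuous f.
  move=> x; apply: cvgB; last exact: cvg_id.
  apply: cvgM; [exact: cvg_cst | exact: Fn_cont].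
have [u uin fu] := @IVT R f 1 u1 0 (ltW u11) (continuous_subspaceT fc) (ltac:(
  rewrite ge_min le_max; apply/andP; split; apply/orP; [left|right];
  rewrite /f ?Fn1; lra)).
move: uin; rewrite in_itv /= => /andP [uu1 uu2].
exists u; split => //; last by move: fu; rewrite /f; lra.
rewrite lt_neqAle uu1 andbT; apply/eqP => e1; move: fu; rewrite /f -e1 Fn1; lra.
Qed.

Lemma minsol (lam : R) : (exists u, 1 < u /\ lam * Fn u = u) ->
  exists m, is_min_sol K d lam m.
Proof.
move=> [u [u1 fu]].
set S := [set v : R | 1 <= v /\ lam * Fn v = v].
have Sne : S !=set0 by exists u; split => //; exact: ltW.
have Slb : has_lbound S by exists 1 => v [].
set m := inf S.
have m1 : 1 <= m by apply: lb_le_inf => // v [].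
have mlb : forall v, S v -> m <= v by move=> v Sv; exact: ge_inf.
exists m; rewrite /is_min_sol Tl_Fn; split => //; split; last first.
  by move=> v v1; rewrite Tl_Fn => fv; apply: mlb; split.
apply/eqP; apply/negPn/negP => fm.
set f := fun u => lam * Fn u - u.
have fm0 : 0 < `|f m| by rewrite normr_gt0 /f subr_eq0.
have fc : f @ m --> f m.
  apply: cvgB; last exact: cvg_id.
  apply: cvgM; [exact: cvg_cst | exact: Fn_cont].
move: fc => /cvgrPdist_lt /(_ _ fm0) /nbhs_ballP [r /= r0 Hr].
have [x Sx xlt] := @inf_adherent R S r r0 (conj Sne Slb).
have mx := mlb x Sx.
have := Hr x; rewrite /ball /= => /(_ (ltac:(rewrite ltr_norml; apply/andP; split; rewrite -/m; lra))).
have -> : f x = 0 by rewrite /f; case: Sx => _ ->; rewrite subrr.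
by rewrite subr0 ltxx.
Qed.
End A.
Arguments Fn {R}.
Arguments Tl_Fn {R K d}.
Arguments froot {R K d}.
Arguments minsol {R K d}.
Arguments good {R K d}.
Arguments dq {R K d}.

Theorem lemma3p4 (R : realType) (K d : nat) (hK1 : (1 <= K)%N) (hKd : (K < d)%N) :
  exists lbar : R, 0 <= lbar /\ lbar < 1 /\
    (forall lam : R, lbar < lam -> lam < 1 ->
       (exists u : R, 1 < u /\ Tl K d lam u = u) /\
       (exists m : R, is_min_sol K d lam m)) /\
    (forall ul : R -> R,
       (forall lam : R, lbar < lam -> lam < 1 -> is_min_sol K d lam (ul lam)) ->
       (ul lam @[lam --> (1:R)^'-] --> (1:R)) /\
       (exists g : R -> R,
          (\forall eps \near (0:R)^'+,
             hl K d lam (ul lam) eps @[lam --> (1:R)^'-] --> g eps) /\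
          (g eps @[eps --> (0:R)^'+] --> (d%:R / K%:R : R)))).
Proof.
have key : forall u1 lam : R, 1 < u1 -> u1 < Fn K d u1 -> u1 / Fn K d u1 < lam ->
    lam < 1 -> exists u, [/\ 1 < u, u <= u1 & lam * Fn K d u = u].
  move=> u1 lam u11 fu1 hl1 lam1; apply: froot => //.
  have Fp : 0 < Fn K d u1 by lra.
  by rewrite -ltr_pdivrMr.
have rat1 : forall u1 : R, 1 < u1 -> u1 < Fn K d u1 -> 0 < u1 / Fn K d u1 < 1.
  move=> u1 u11 fu1; rewrite divr_gt0 /=; [|lra|lra].
  by rewrite ltr_pdivrMr ?mul1r //; lra.
have [u0 [u01 [_ fu0]]] := @good R K d hK1 hKd 1 ltr01.
have /andP [lb0 lb1] := rat1 u0 u01 fu0.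
exists (u0 / Fn K d u0); split; first exact: ltW.
split => //; split.
  move=> lam hl1 lam1.
  have [u [uu1 _ fu]] := key u0 lam u01 fu0 hl1 lam1.
  have ex : exists u, 1 < u /\ Tl K d lam u = u by exists u; split; [exact: uu1 | rewrite Tl_Fn].
  by split => //; apply: minsol; exists u; split.
move=> ul Hul.
have ha : ul lam @[lam --> (1:R)^'-] --> (1:R).
  apply/cvgrPdist_lt => e e0.
  have [u1 [u11 [u1e fu1]]] := good hK1 hKd _ e0.
  have /andP [_ r1] := rat1 u1 u11 fu1.
  near=> lam.
  have lam1 : lam < 1 by near: lam; exact: nbhs_left_lt.
  have lamb : u0 / Fn K d u0 < lam by near: lam; exact: nbhs_left_gt.
  have lamu : u1 / Fn K d u1 < lam by near: lam; exact: nbhs_left_gt.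
  have [u [uu1 uu2 fu]] := key u1 lam u11 fu1 lamu lam1.
  have [m1 [_ mmin]] := Hul lam lamb lam1.
  have : ul lam <= u by apply: mmin; [exact: ltW | rewrite Tl_Fn].
  move=> hu; rewrite ltr_norml; apply/andP; split; lra.
split => //.
exists (fun eps => (1 - Fn K d (1 - eps)) / eps); split.
  apply: nearW => eps.
  have -> : (fun lam => hl K d lam (ul lam) eps) =
            (fun lam => (ul lam - lam * Fn K d (ul lam - eps)) / eps).
    by apply/funext => lam; rewrite /hl Tl_Fn.
  suff H : (fun lam => (ul lam - lam * Fn K d (ul lam - eps)) / eps) @ (1:R)^'- -->
      ((1 - 1 * Fn K d (1 - eps)) / eps) by rewrite mul1r in H.
  apply: cvgM; last exact: cvg_cst.
  apply: cvgB => //; apply: cvgM.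
    exact: (@cvg_at_left_filter R R (fun z => z) 1 1 cvg_id).
  apply: (@continuous_cvg R R R _ _ (fun lam => ul lam - eps) (Fn K d) (1 - eps) (@Fn_cont R K d (1 - eps))).
  by apply: cvgB => //; exact: cvg_cst.
apply/cvgrPdist_lt => e e0.
have [r r0 Hr] := @dq R K d hK1 _ e0.
near=> eps.
have e1 : 0 < eps by near: eps; exact: nbhs_right_gt.
have e2 : eps < r by near: eps; exact: nbhs_right_lt.
have := Hr (- eps); rewrite oppr_eq0 normrN gtr0_norm // => /(_ (lt0r_neq0 e1) e2).
have -> : (- eps)^-1 * (Fn K d (- eps + 1) - 1) = (1 - Fn K d (1 - eps)) / eps.
  by rewrite [- eps + 1]addrC invrN mulNr -mulrN opprB mulrC.
done.
Unshelve. all: by end_near.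
Qed.
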